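(* Let $d\ge 2$ and let $P$ be a 2-dimensional 0-1 matrix of dimensions $r\times s$. Let $P_d$ be the $d$-dimensional 0-1 matrix of dimensions $r\times s\times 1\times\cdots\times 1$ whose entry $(i,j,1,\dots,1)$ is $1$ if and only if entry $(i,j)$ of $P$ is $1$. Then for all $n$, $\operatorname{sat}(n,P_d,d)=n^{d-2}\operatorname{sat}(n,P)$.
   Context: A $d$-dimensional 0-1 matrix $A$ contains a $d$-dimensional 0-1 matrix $P$ if some submatrix of $A$ (obtained by selecting, in each of the $d$ dimensions, a subset of indices, keeping their order) is equal to $P$ or can be turned into $P$ by changing some ones to zeroes; otherwise $A$ avoids $P$. $A$ is saturating for $P$ if $A$ avoids $P$ but changing any zero of $A$ to a one creates a copy of $P$. $\operatorname{sat}(n,P,d)$ is the minimum number of ones in a $d$-dimensional 0-1 matrix of dimensions $n\times\cdots\times n$ that is saturating for $P$; $\operatorname{sat}(n,P)$ denotes the case $d=2$, i.e. the minimum number of ones in an $n\times n$ 0-1 matrix saturating for $P$. *)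

(* Defs.v *)
From mathcomp Require Import all_boot.
Set Implicit Arguments. Unset Strict Implicit. Unset Printing Implicit Defensive.

(* Positions of a d-dimensional matrix of dimensions dm 0 x ... x dm (d-1);
   indices are 0-based. *)
Definition pos (d : nat) (dm : 'I_d -> nat) : finType :=
  {dffun forall k : 'I_d, 'I_(dm k)}.

Definition dmat (d : nat) (dm : 'I_d -> nat) : finType := {ffun pos dm -> bool}.

Definition cube (d n : nat) : 'I_d -> nat := fun _ => n.
Arguments cube : clear implicits.

Definition ddims (d r s : nat) : 'I_d -> nat :=
  fun k => if val k == 0 then r else if val k == 1 then s else 1.
Arguments ddims : clear implicits.

Definition incr (m n : nat) (f : {ffun 'I_m -> 'I_n}) : bool :=
  [forall i : 'I_m, forall j : 'I_m, (i < j) ==> (f i < f j)].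

Definition contains (d : nat) (dmP dmA : 'I_d -> nat)
    (P : dmat dmP) (A : dmat dmA) : bool :=
  [exists F : {dffun forall k : 'I_d, {ffun 'I_(dmP k) -> 'I_(dmA k)}},
     [forall k : 'I_d, incr (F k)] &&
     [forall x : pos dmP,
        P x ==> A (finfun (fun k : 'I_d => F k (x k)) : pos dmA)]].

Definition avoids d dmP dmA (P : dmat dmP) (A : dmat dmA) : bool :=
  ~~ @contains d dmP dmA P A.

Definition setone d dm (A : @dmat d dm) (x : pos dm) : dmat dm :=
  [ffun y => (y == x) || A y].

Definition saturating d dmP dmA (P : dmat dmP) (A : dmat dmA) : bool :=
  @avoids d dmP dmA P A &&
  [forall x : pos dmA, ~~ A x ==> contains P (setone A x)].

Definition ones d dm (A : @dmat d dm) : nat := #|[pred x | A x]|.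

(* sat(n,P,d): minimum number of ones of an n x ... x n d-dimensional matrix
   saturating for P (convention: 0 if no saturating matrix exists). *)
Definition sat (d : nat) (dmP : 'I_d -> nat) (n : nat) (P : dmat dmP) : nat :=
  match [pick A : dmat (cube d n) | saturating P A] with
  | Some A0 => \big[minn/ones A0]_(A : dmat (cube d n) | saturating P A) ones A
  | None => 0
  end.

Definition lift_mat (d r s : nat) (P : dmat (ddims 2 r s)) : dmat (ddims d r s) :=
  [ffun x : pos (ddims d r s) =>
     [exists y : pos (ddims 2 r s),
        P y && [forall k : 'I_d,
          val (x k) == (if val k == 0 then val (y ord0)
                        else if val k == 1 then val (y ord_max) else 0)]]].

(* Main.v *)
Require Import Defs.
From mathcomp Require Import all_boot.
Set Implicit Arguments. Unset Strict Implicit. Unset Printing Implicit Defensive.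

Section S.
Variables (m n r s : nat).
Local Notation D := m.+2.
Local Notation T := {ffun 'I_m -> 'I_n}.
Local Notation pos2 := (pos (cube 2 n)).
Local Notation posD := (pos (cube D n)).

Definition head (x : posD) : pos2 := finfun (fun a : 'I_2 => (x (lshift m a) : 'I_n)).
Definition tail (x : posD) : T := [ffun b : 'I_m => (x (rshift 2 b) : 'I_n)].
Definition emb (y : pos2) (z : T) : posD :=
  finfun (fun k : 'I_D => match @split 2 m k with inl a => (y a : 'I_n) | inr b => z b end).

Lemma split_l (a : 'I_2) : @split 2 m (lshift m a) = inl a.
Proof. exact: (unsplitK (inl a)). Qed.
Lemma split_r (b : 'I_m) : @split 2 m (rshift 2 b) = inr b.
Proof. exact: (unsplitK (inr b)). Qed.

Lemma head_emb y z : head (emb y z) = y.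
Proof. by apply/ffunP => a; rewrite !ffunE split_l. Qed.
Lemma tail_emb y z : tail (emb y z) = z.
Proof. by apply/ffunP => b; rewrite !ffunE split_r. Qed.
Lemma emb_ht x : emb (head x) (tail x) = x.
Proof.
apply/ffunP => k; rewrite ffunE.
have := @splitK 2 m k; case: (@split 2 m k) => [a|b] <-; by rewrite ffunE.
Qed.
Lemma emb_inj y z y' z' : (emb y z == emb y' z') = (y == y') && (z == z').
Proof.
case: eqP => [E|ne].
  by have := congr1 head E; have := congr1 tail E; rewrite !head_emb !tail_emb => -> ->; rewrite !eqxx.
by symmetry; apply/andP => -[/eqP E1 /eqP E2]; apply: ne; rewrite E1 E2.
Qed.

Definition slice (A : dmat (cube D n)) (z : T) : dmat (cube 2 n) := [ffun y => A (emb y z)].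
Definition glue (B : T -> dmat (cube 2 n)) : dmat (cube D n) := [ffun x => B (tail x) (head x)].

Lemma slice_glue B z : slice (glue B) z = B z.
Proof. by apply/ffunP => y; rewrite !ffunE head_emb tail_emb. Qed.

Lemma ones_sum d dm (A : @dmat d dm) : ones A = \sum_x (A x : nat).
Proof. by rewrite /ones -sum1_card big_mkcond. Qed.

Lemma ones_slice A : ones A = \sum_(z : T) ones (slice A z).
Proof.
rewrite ones_sum.
rewrite (reindex (fun p : pos2 * T => emb p.1 p.2)) /=; last first.
  exists (fun x => (head x, tail x)) => [[y z] _|x _] /=.
    by rewrite head_emb tail_emb.
  by rewrite emb_ht.
rewrite -(pair_big xpredT xpredT (fun y z => (A (emb y z) : nat))) /= exchange_big.
by apply: eq_bigr => z _; rewrite ones_sum; apply: eq_bigr => y _; rewrite ffunE.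
Qed.

Lemma slice_setone A x z :
  slice (setone A x) z = if tail x == z then setone (slice A z) (head x) else slice A z.
Proof.
apply/ffunP => y; rewrite !ffunE -{1}(emb_ht x) emb_inj.
case: (eqVneq (tail x) z) => [<-|ne].
  by rewrite /setone /slice !ffunE andbT.
by rewrite andbF /slice ffunE.
Qed.
Section C.
Variable P : dmat (ddims 2 r s).

Definition coord (y : pos (ddims 2 r s)) (t : nat) : nat :=
  if t == 0 then val (y ord0) else if t == 1 then val (y ord_max) else 0.

Lemma liftE (x : pos (ddims D r s)) :
  lift_mat D P x = [exists y, P y && [forall k : 'I_D, val (x k) == coord y (val k)]].
Proof. by rewrite ffunE. Qed.

Lemma coord_lt (y : pos (ddims 2 r s)) (k : 'I_D) : coord y k < ddims D r s k.
Proof.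
rewrite /coord /ddims; case: ifP => _; first exact: ltn_ord.
by case: ifP => _ //; exact: ltn_ord.
Qed.

Lemma coord_2 (y : pos (ddims 2 r s)) (a : 'I_2) : coord y a = val (y a).
Proof. by case: a => [[|[|t]] Ht] //; rewrite /coord /=; congr (val (y _)); apply: val_inj. Qed.

Definition liftpos (y : pos (ddims 2 r s)) : pos (ddims D r s) :=
  finfun (fun k => Ordinal (coord_lt y k)).

Lemma contains_lift A : contains (lift_mat D P) A -> exists z, contains P (slice A z).
Proof.
move=> /existsP [F /andP [/forallP Finc /forallP FP]].
pose z : T := [ffun b => F (rshift 2 b) (ord0 : 'I_1)].
exists z; apply/existsP.
exists (finfun (fun a : 'I_2 => F (lshift m a) : {ffun 'I_(ddims 2 r s a) -> 'I_(cube 2 n a)})).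
apply/andP; split.
  apply/forallP => a; rewrite ffunE; exact: (Finc (lshift m a)).
apply/forallP => y; apply/implyP => Py.
have := FP (liftpos y); rewrite liftE.
have -> : [exists y', P y' && [forall k : 'I_D, val (liftpos y k) == coord y' (val k)]].
  by apply/existsP; exists y; rewrite Py; apply/forallP => k; rewrite ffunE.
move=> /= HA; rewrite /slice ffunE.
have E : forall p q : posD, p = q -> A q -> A p by move=> p q ->.
apply: (E _ _ _ HA).
apply/ffunP => k; rewrite !ffunE.
have := @splitK 2 m k; case: (@split 2 m k) => [a|b] <-; rewrite ?ffunE.
  by apply: congr1; apply: val_inj => /=; rewrite coord_2.
by apply: congr1; apply: val_inj.
Qed.
Variable o : 'I_n.
Definition evaln b (g : {ffun 'I_b -> 'I_n}) (t : nat) : 'I_n :=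
  if insub t is Some i then g i else o.
Lemma evalnE b g (i : 'I_b) : evaln g (val i) = g i.
Proof. by rewrite /evaln valK. Qed.

Lemma lift_contains A z : contains P (slice A z) -> contains (lift_mat D P) A.
Proof.
move=> /existsP [G /andP [/forallP Ginc /forallP GP]].
apply/existsP.
pose F := finfun (fun k : 'I_D => [ffun i : 'I_(ddims D r s k) =>
   match @split 2 m k with inl a => evaln (G a) (val i) | inr b => z b end]
   : {ffun 'I_(ddims D r s k) -> 'I_(cube D n k)}).
exists F; apply/andP; split.
  apply/forallP => k; apply/forallP => i; apply/forallP => j; apply/implyP => lt.
  rewrite !ffunE.
  move: i j lt; have := @splitK 2 m k; case: (@split 2 m k) => [a|b] <- i j lt.
    have Hi : val i < ddims 2 r s a by exact: ltn_ord.
    have Hj : val j < ddims 2 r s a by exact: ltn_ord.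
    rewrite -[val i]/(val (Ordinal Hi)) -[val j]/(val (Ordinal Hj)) !evalnE.
    by have := forallP (forallP (Ginc a) (Ordinal Hi)) (Ordinal Hj); rewrite lt.
  have Hi := ltn_ord i; have Hj := ltn_ord j.
  rewrite /ddims /= in Hi Hj.
  by move: lt; case: (val i) Hi => // _; case: (val j) Hj.
apply/forallP => x; apply/implyP; rewrite liftE => /existsP [y /andP [Py /forallP Hx]].
have := GP y; rewrite Py /= /slice ?ffunE => HA.
have E : forall p q : posD, p = q -> A q -> A p by move=> p q ->.
apply: (E _ _ _ HA).
apply/ffunP => k; rewrite !ffunE.
move: (Hx k); have := @splitK 2 m k; case: (@split 2 m k) => [a|b] <- Hk; rewrite ?ffunE //.
rewrite (eqP Hk) /= coord_2.
exact: evalnE.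
Qed.
Lemma avoid_lift A : avoids (lift_mat D P) A = [forall z, avoids P (slice A z)].
Proof.
apply/idP/idP.
  move=> H; apply/forallP => z; apply/negP => C; move/negP: H; apply; exact: lift_contains C.
move=> /forallP H; apply/negP => /contains_lift [z C]; by move: (H z); rewrite /avoids C.
Qed.

Lemma sat_lift A : saturating (lift_mat D P) A = [forall z, saturating P (slice A z)].
Proof.
rewrite /saturating avoid_lift.
apply/andP/forallP.
  case=> /forallP Hav /forallP Hs z; rewrite Hav /=.
  apply/forallP => y; apply/implyP => Hy.
  have := Hs (emb y z); rewrite /slice ffunE in Hy; rewrite Hy /= => /contains_lift [z' C].
  move: C; rewrite slice_setone tail_emb head_emb; case: eqP => [<- // | _] C.
  by move: (Hav z'); rewrite /avoids C.
move=> H; split.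
  by apply/forallP => z; case/andP: (H z).
apply/forallP => x; apply/implyP => Hx.
have := H (tail x); case/andP => _ /forallP /(_ (head x)).
rewrite /slice ffunE emb_ht Hx /= => C.
by apply: (lift_contains (z := tail x)); rewrite slice_setone eqxx.
Qed.
End C.
End S.

Lemma bigmin_le (T : eqType) (rr : seq T) (p : pred T) (F : T -> nat) x0 a :
  a \in rr -> p a -> \big[minn/x0]_(i <- rr | p i) F i <= F a.
Proof.
elim: rr => //= b rr IH; rewrite in_cons big_cons => /orP [/eqP<-|Ha] Pa.
  by rewrite Pa geq_minl.
case: ifP => _; last exact: IH.
exact: leq_trans (geq_minr _ _) (IH Ha Pa).
Qed.

Lemma bigmin_in (T : eqType) (rr : seq T) (p : pred T) (F : T -> nat) x0 :
  \big[minn/x0]_(i <- rr | p i) F i = x0 \/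
  exists a, [/\ a \in rr, p a & \big[minn/x0]_(i <- rr | p i) F i = F a].
Proof.
elim: rr => [|b rr IH]; first by left; rewrite big_nil.
rewrite big_cons.
set X := \big[minn/x0]_(i <- rr | p i) F i in IH *.
have IH' : X = x0 \/ exists a, [/\ a \in b :: rr, p a & X = F a].
  case: IH => [->|[a [Ha Pa E]]]; first by left.
  by right; exists a; split => //; rewrite in_cons Ha orbT.
case Pb: (p b); last exact: IH'.
case: (leqP (F b) X) => Hb.
  right; exists b; split => //; first by rewrite in_cons eqxx.
exact: IH'.
Qed.

Section Sat.
Variables (d : nat) (dmP : 'I_d -> nat) (n : nat) (P : dmat dmP).

Lemma sat_none : (forall A : dmat (cube d n), ~~ saturating P A) -> sat n P = 0.
Proof. by move=> H; rewrite /sat; case: pickP => // A0 HA; move: (H A0); rewrite HA. Qed.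

Lemma sat_le (A : dmat (cube d n)) : saturating P A -> sat n P <= ones A.
Proof.
move=> HA; rewrite /sat; case: pickP => [A0 H0|/(_ A)]; last by rewrite HA.
exact: bigmin_le (mem_index_enum _) HA.
Qed.

Lemma sat_attained : (exists A : dmat (cube d n), saturating P A) ->
  exists2 A : dmat (cube d n), saturating P A & sat n P = ones A.
Proof.
move=> [A HA]; rewrite /sat; case: pickP => [A0 H0|/(_ A)]; last by rewrite HA.
have [E|[a [_ Pa E]]] := bigmin_in (index_enum (dmat (cube d n)))
   (fun B => saturating P B) (fun B => ones B) (ones A0); rewrite E.
  by exists A0.
by exists a.
Qed.

Lemma sat_eq v : (exists2 A : dmat (cube d n), saturating P A & ones A = v) ->
  (forall A : dmat (cube d n), saturating P A -> v <= ones A) -> sat n P = v.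
Proof.
move=> [A HA EA] Hv.
have [B HB EB] := sat_attained (ex_intro _ A HA).
apply/eqP; rewrite eqn_leq -{1}EA sat_le //= EB; exact: Hv.
Qed.

End Sat.

Lemma sat0 k (dm : 'I_k.+1 -> nat) (Q : dmat dm) : sat 0 Q = 0.
Proof.
case: (pickP (fun A : dmat (cube k.+1 0) => saturating Q A)) => [A HA|H].
  apply/eqP; rewrite -leqn0; apply: leq_trans (sat_le HA) _.
  rewrite leqn0; apply/eqP; apply: eq_card0 => x; by case: (x ord0).
by apply: sat_none => A; rewrite H.
Qed.


Unset Implicit Arguments.
Set Strict Implicit.
Set Printing Implicit Defensive.

Theorem lemma4 (d r s : nat) (P : dmat (ddims 2 r s)) :
  2 <= d ->
  forall n : nat,
    sat n (lift_mat d P) = n ^ (d - 2) * sat n P.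
Proof.
case: d => [|[|m]] // _ n.
rewrite subSS subSS subn0.
case: n => [|n]; first by rewrite !sat0 muln0.
have o : 'I_n.+1 := ord0.
case: (pickP (fun B : dmat (cube 2 n.+1) => saturating P B)) => [B0 HB0 | none]; last first.
  rewrite (@sat_none 2 _ _ P) ?muln0; last by move=> B; rewrite none.
  apply: sat_none => A; rewrite (sat_lift P o); apply/negP => /forallP /(_ [ffun _ => o]).
  by rewrite none.
have [B HB EB] := sat_attained (ex_intro _ B0 HB0).
rewrite EB; apply: sat_eq.
  exists (glue (fun _ => B)).
    by rewrite (sat_lift P o); apply/forallP => z; rewrite slice_glue.
  rewrite ones_slice; under eq_bigr do rewrite slice_glue.
  by rewrite big_const iter_addn_0 card_ffun !card_ord mulnC.
move=> A; rewrite (sat_lift P o) => /forallP HA.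
rewrite (ones_slice A).
have E : \sum_(z : {ffun 'I_m -> 'I_n.+1}) ones B = n.+1 ^ m * ones B.
  by rewrite big_const iter_addn_0 card_ffun !card_ord mulnC.
rewrite -E; apply: leq_sum => z _; rewrite -EB; exact: sat_le.
Qed.
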